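(* Let $\delta>0$ and let $U\in C^1(-1,-1+\delta)$ satisfy $(1-x^2)U'+2xU+\frac12U^2=P_c(x)$ on $(-1,-1+\delta)$ for some $c_1,c_2,c_3\in\mathbb{R}$. Then $c_1\ge-1$, the limit $U(-1):=\lim_{x\to-1^+}U(x)$ exists and is finite, and $U(-1)=\tau_1(c_1)$ or $U(-1)=\tau_2(c_1)$.
   Context: $P_c(x):=c_1(1-x)+c_2(1+x)+c_3(1-x^2)$ for $c=(c_1,c_2,c_3)$. $\tau_1(c_1):=2-2\sqrt{1+c_1}$, $\tau_2(c_1):=2+2\sqrt{1+c_1}$. *)

(* Defs.v *)
From Stdlib Require Import Reals.
From Coquelicot Require Import Coquelicot.
Open Scope R_scope.

Definition Pc (c1 c2 c3 x : R) : R :=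
  c1 * (1 - x) + c2 * (1 + x) + c3 * (1 - x ^ 2).

Definition tau1 (c1 : R) : R := 2 - 2 * sqrt (1 + c1).
Definition tau2 (c1 : R) : R := 2 + 2 * sqrt (1 + c1).

(* Main.v *)
Require Import Defs.
From Stdlib Require Import Reals Lra Psatz Classical.
From Coquelicot Require Import Coquelicot.
Open Scope R_scope.


Lemma quot_bound (g : R -> R) c l : is_derive g c l ->
  forall eps, 0 < eps -> exists eta, 0 < eta /\ forall h, h <> 0 -> Rabs h < eta ->
   Rabs ((g (c + h) - g c) / h - l) < eps.
Proof.
  intros H eps Heps. apply is_derive_Reals in H.
  destruct (H eps Heps) as [d Hd]. exists d. split; [apply cond_pos|]. intros; now apply Hd.
Qed.

Lemma cont_of_deriv (g : R -> R) c l : is_derive g c l ->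
  forall eps, 0 < eps -> exists eta, 0 < eta /\ forall y, Rabs (y - c) < eta ->
   Rabs (g y - g c) < eps.
Proof.
  intros H eps Heps.
  destruct (quot_bound g c l H 1 ltac:(lra)) as [d [Hd1 Hd]].
  assert (Hl : 0 < Rabs l + 1) by (pose proof (Rabs_pos l); lra).
  exists (Rmin d (eps / (Rabs l + 1))). split.
  { apply Rmin_pos; [lra| apply Rdiv_lt_0_compat; lra]. }
  intros y Hy.
  destruct (Req_dec y c) as [->|Hne].
  { replace (g c - g c) with 0 by ring. rewrite Rabs_R0; lra. }
  set (h := y - c).
  assert (hne : h <> 0) by (unfold h; lra).
  assert (Hh1 : Rabs h < d) by (apply Rlt_le_trans with (1 := Hy); apply Rmin_l).
  assert (Hh2 : Rabs h < eps / (Rabs l + 1)) by (apply Rlt_le_trans with (1 := Hy); apply Rmin_r).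
  specialize (Hd h hne Hh1). replace (c + h) with y in Hd by (unfold h; ring).
  set (q := (g y - g c) / h) in *.
  assert (E : g y - g c = q * h) by (unfold q; field; auto).
  rewrite E, Rabs_mult.
  assert (Hq : Rabs q <= Rabs l + 1).
  { replace q with ((q - l) + l) by ring.
    eapply Rle_trans; [apply Rabs_triang|]. lra. }
  assert (Hh3 : Rabs h * (Rabs l + 1) < eps).
  { apply (Rmult_lt_compat_r (Rabs l + 1)) in Hh2; [|lra].
    unfold Rdiv in Hh2. rewrite Rmult_assoc, Rinv_l in Hh2; lra. }
  pose proof (Rabs_pos q). pose proof (Rabs_pos h). nra.
Qed.

Lemma sign_neg (g : R -> R) c l : is_derive g c l -> l < 0 ->
  exists eta, 0 < eta /\ (forall y, c - eta < y < c -> g c < g y) /\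
                         (forall y, c < y < c + eta -> g y < g c).
Proof.
  intros H Hl.
  destruct (quot_bound g c l H (- l / 2) ltac:(lra)) as [d [Hd1 Hd]].
  exists d. split; [lra|]. split; intros y Hy.
  - assert (hne : y - c <> 0) by lra.
    assert (Hh : Rabs (y - c) < d) by (rewrite Rabs_left; lra).
    specialize (Hd _ hne Hh). replace (c + (y - c)) with y in Hd by ring.
    set (q := (g y - g c) / (y - c)) in *.
    assert (E : g y - g c = q * (y - c)) by (unfold q; field; auto).
    apply Rabs_def2 in Hd. nra.
  - assert (hne : y - c <> 0) by lra.
    assert (Hh : Rabs (y - c) < d) by (rewrite Rabs_right; lra).
    specialize (Hd _ hne Hh). replace (c + (y - c)) with y in Hd by ring.
    set (q := (g y - g c) / (y - c)) in *.
    assert (E : g y - g c = q * (y - c)) by (unfold q; field; auto).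
    apply Rabs_def2 in Hd. nra.
Qed.

Lemma cross_strict (g g' : R -> R) p q v :
  (forall x, p < x < q -> is_derive g x (g' x)) ->
  (forall x, p < x < q -> g x = v -> g' x < 0) ->
  forall a b, p < a -> a < b -> b < q -> g a < v -> g b < v.
Proof.
  intros Hd Hs a b pa ab bq ga.
  destruct (Rlt_or_le (g b) v) as [|gb]; [assumption|exfalso].
  set (E := fun y => a <= y <= b /\ forall z, a <= z <= y -> g z < v).
  assert (HB : bound E) by (exists b; intros y [Hy _]; lra).
  assert (HE : exists y, E y).
  { exists a. split; [lra|]. intros z Hz. replace z with a by lra. auto. }
  destruct (completeness E HB HE) as [c [Hub Hlub]].
  assert (Hac : a <= c) by (apply Hub; destruct HE; split; [lra|]; intros z Hz; replace z with a by lra; auto).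
  assert (Hcb : c <= b) by (apply Hlub; intros y [Hy _]; lra).
  assert (H2 : forall z, a <= z < c -> g z < v).
  { intros z Hz. destruct (classic (exists y, E y /\ z < y)) as [[y [[Hy1 Hy2] Hzy]]|Hn].
    - apply Hy2; lra.
    - exfalso. assert (c <= z); [|lra]. apply Hlub. intros y Ey.
      destruct (Rle_or_lt y z); auto. exfalso; apply Hn; eauto. }
  assert (Hdc : is_derive g c (g' c)) by (apply Hd; lra).
  destruct (Rtotal_order (g c) v) as [Hlt|[Heq|Hgt]].
  - destruct (cont_of_deriv g c _ Hdc (v - g c) ltac:(lra)) as [eta [Heta Hc]].
    destruct (Req_dec c b) as [->|Hne]; [lra|].
    set (y := Rmin (c + eta / 2) b).
    assert (Hy1 : c < y) by (unfold y; apply Rmin_glb_lt; lra).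
    assert (Hy2 : y <= c + eta / 2) by apply Rmin_l.
    assert (Hy3 : y <= b) by apply Rmin_r.
    assert (E y).
    { split; [lra|]. intros z Hz. destruct (Rlt_or_le z c); [apply H2; lra|].
      assert (Rabs (z - c) < eta) by (rewrite Rabs_right; lra).
      specialize (Hc z H0). apply Rabs_def2 in Hc. lra. }
    specialize (Hub y H). lra.
  - assert (Hs' := Hs c ltac:(lra) Heq).
    destruct (sign_neg g c _ Hdc Hs') as [eta [Heta [Hl _]]].
    assert (a < c) by (destruct (Req_dec a c) as [<-|]; lra).
    set (y := Rmax a (c - eta / 2)).
    assert (Hy1 : y < c) by (unfold y; apply Rmax_lub_lt; lra).
    assert (Hy2 : c - eta / 2 <= y) by apply Rmax_r.
    assert (Hy3 : a <= y) by apply Rmax_l.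
    specialize (Hl y ltac:(lra)). specialize (H2 y ltac:(lra)). lra.
  - destruct (cont_of_deriv g c _ Hdc (g c - v) ltac:(lra)) as [eta [Heta Hc]].
    assert (a < c) by (destruct (Req_dec a c) as [<-|]; lra).
    set (y := Rmax a (c - eta / 2)).
    assert (Hy1 : y < c) by (unfold y; apply Rmax_lub_lt; lra).
    assert (Hy2 : c - eta / 2 <= y) by apply Rmax_r.
    assert (Hy3 : a <= y) by apply Rmax_l.
    assert (Rabs (y - c) < eta) by (rewrite Rabs_left; lra).
    specialize (Hc y H0). apply Rabs_def2 in Hc. specialize (H2 y ltac:(lra)). lra.
Qed.

Lemma cross (g g' : R -> R) p q v :
  (forall x, p < x < q -> is_derive g x (g' x)) ->
  (forall x, p < x < q -> g x = v -> g' x < 0) ->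
  forall a b, p < a -> a < b -> b < q -> g a <= v -> g b < v.
Proof.
  intros Hd Hs a b pa ab bq ga.
  destruct (Rlt_or_le (g a) v) as [|ga']; [eapply cross_strict; eauto|].
  assert (Heq : g a = v) by lra.
  destruct (sign_neg g a _ (Hd a ltac:(lra)) (Hs a ltac:(lra) Heq)) as [eta [Heta [_ Hr]]].
  set (a' := Rmin (a + eta / 2) ((a + b) / 2)).
  assert (a < a') by (unfold a'; apply Rmin_glb_lt; lra).
  assert (a' <= a + eta / 2) by apply Rmin_l.
  assert (a' <= (a + b) / 2) by apply Rmin_r.
  apply (cross_strict g g' p q v Hd Hs a'); try lra.
  specialize (Hr a' ltac:(lra)). lra.
Qed.

Lemma cross_up (g g' : R -> R) p q v :
  (forall x, p < x < q -> is_derive g x (g' x)) ->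
  (forall x, p < x < q -> g x = v -> 0 < g' x) ->
  forall a b, p < a -> a < b -> b < q -> v <= g a -> v < g b.
Proof.
  intros Hd Hs a b pa ab bq ga.
  assert (- g b < - v); [|lra].
  apply (cross (fun x => - g x) (fun x => - g' x) p q (- v)) with (a := a); try lra.
  - intros x Hx. apply (is_derive_opp g x (g' x)). auto.
  - intros x Hx Hgx. assert (0 < g' x) by (apply Hs; lra). lra.
Qed.

Lemma log_unb (g g' : R -> R) e m : 0 < e -> 0 < m ->
  (forall x, -1 < x < -1 + e -> is_derive g x (g' x)) ->
  (forall x, -1 < x < -1 + e -> m / (x + 1) <= g' x) ->
  forall B, exists x, -1 < x < -1 + e /\ g x < B.
Proof.
  intros He Hm Hd Hg B.
  set (k := m / 2).
  assert (Hk : 0 < k) by (unfold k; lra).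
  set (phi := fun x => g x - k * ln (x + 1)).
  assert (Hinc : forall x y, -1 < x -> x < y -> y < -1 + e -> phi x < phi y).
  { intros x y Hx Hxy Hy.
    apply (incr_function phi (Finite (-1)) (Finite (-1 + e)) (fun x => g' x - k * / (x + 1)));
      simpl; auto.
    - intros z Hz1 Hz2. unfold phi.
      apply (@is_derive_minus R_AbsRing R_NormedModule g (fun z => k * ln (z + 1)) z (g' z) (k * / (z + 1))).
      + apply Hd; lra.
      + apply (is_derive_scal (fun z => ln (z + 1)) z k (/ (z + 1))).
        auto_derive; [lra| field; lra].
    - intros z Hz1 Hz2. specialize (Hg z (conj Hz1 Hz2)).
      assert (0 < z + 1) by lra.
      assert (k * / (z + 1) < m / (z + 1)).
      { unfold Rdiv, k. apply Rmult_lt_compat_r. apply Rinv_0_lt_compat; lra. lra. }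
      lra. }
  set (b := -1 + e / 2).
  set (l := ln (b + 1)).
  set (t := - Rabs (B - phi b) / k - 1 - Rabs l).
  set (X := exp t).
  assert (HX0 : 0 < X) by apply exp_pos.
  assert (HXb : X < b + 1).
  { unfold X. rewrite <- (exp_ln (b + 1)) by (unfold b; lra). apply exp_increasing.
    unfold t. fold l. pose proof (Rabs_pos (B - phi b)).
    assert (0 <= Rabs (B - phi b) / k) by (apply Rdiv_le_0_compat; lra).
    pose proof (Rle_abs l). pose proof (Rabs_pos l). 
    assert (- l <= Rabs l) by (rewrite <- Rabs_Ropp; apply Rle_abs). lra. }
  exists (X - 1). split; [unfold b in *; lra|].
  assert (H1 : phi (X - 1) < phi b) by (apply Hinc; unfold b in *; lra).
  unfold phi at 1 in H1. replace (X - 1 + 1) with X in H1 by ring.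
  assert (HlX : ln X = t) by (unfold X; apply ln_exp). rewrite HlX in H1. unfold t in H1.
  assert (k * (- Rabs (B - phi b) / k - 1 - Rabs l) = - Rabs (B - phi b) - k - k * Rabs l).
  { field. lra. }
  rewrite H in H1. pose proof (Rabs_pos l).
  assert (- (B - phi b) <= Rabs (B - phi b)) by (rewrite <- Rabs_Ropp; apply Rle_abs).
  assert (0 <= k * Rabs l) by (apply Rmult_le_pos; lra).
  lra.
Qed.

Lemma log_unb_above (g g' : R -> R) e m : 0 < e -> 0 < m ->
  (forall x, -1 < x < -1 + e -> is_derive g x (g' x)) ->
  (forall x, -1 < x < -1 + e -> g' x <= - (m / (x + 1))) ->
  forall B, exists x, -1 < x < -1 + e /\ B < g x.
Proof.
  intros He Hm Hd Hg B.
  destruct (log_unb (fun x => - g x) (fun x => - g' x) e m He Hm) with (B := - B) as [x [Hx Hgx]].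
  - intros x Hx. apply (is_derive_opp g x (g' x)). auto.
  - intros x Hx. specialize (Hg x Hx). lra.
  - exists x. split; auto. lra.
Qed.

Definition f (c1 u : R) := 2 * c1 + 2 * u - / 2 * u ^ 2.
Definition Hf (c1 c2 c3 x u : R) := Pc c1 c2 c3 x - 2 * x * u - / 2 * u ^ 2.
Definition Kc (c1 c2 c3 : R) := Rabs c1 + Rabs c2 + 2 * Rabs c3.
Definition ev (P : R -> Prop) := exists e, 0 < e /\ forall x, -1 < x < -1 + e -> P x.
Definition Hyp delta c1 c2 c3 (U U' : R -> R) :=
  0 < delta /\ (forall x, -1 < x < -1 + delta -> is_derive U x (U' x)) /\
  (forall x, -1 < x < -1 + delta -> (1 - x ^ 2) * U' x = Hf c1 c2 c3 x (U x)).

Lemma lt_div_mul a m k : 0 < k -> a < m / k -> a * k < m.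
Proof. intros Hk H. replace m with ((m / k) * k) by (field; lra). nra. Qed.

Lemma div_le k y t : 0 < t -> k <= y * t -> k / t <= y.
Proof. intros Ht H. replace y with ((y * t) / t) by (field; lra).
  unfold Rdiv. apply Rmult_le_compat_r; [left; apply Rinv_0_lt_compat; lra| lra]. Qed.

Lemma Kc_pos c1 c2 c3 : 0 <= Kc c1 c2 c3.
Proof. unfold Kc. pose proof (Rabs_pos c1). pose proof (Rabs_pos c2). pose proof (Rabs_pos c3). lra. Qed.

Lemma A_bound c1 c2 c3 x : -1 < x < 0 -> Rabs (c2 - c1 + c3 * (1 - x)) <= Kc c1 c2 c3.
Proof.
  intros Hx. unfold Kc.
  replace (c2 - c1 + c3 * (1 - x)) with ((c2 + - c1) + c3 * (1 - x)) by ring.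
  eapply Rle_trans; [apply Rabs_triang|].
  eapply Rle_trans.
  { apply Rplus_le_compat_r. apply Rabs_triang. }
  rewrite Rabs_Ropp, Rabs_mult, (Rabs_right (1 - x)) by lra.
  pose proof (Rabs_pos c3). nra.
Qed.

Lemma Hf_decomp c1 c2 c3 x u :
  Hf c1 c2 c3 x u - f c1 u = (x + 1) * ((c2 - c1 + c3 * (1 - x)) - 2 * u).
Proof. unfold Hf, f, Pc. ring. Qed.

Lemma near c1 c2 c3 M m : 0 < m -> 0 <= M -> exists e, 0 < e /\ e <= 1/2 /\
  forall x u, -1 < x < -1 + e -> Rabs u <= M -> Rabs (Hf c1 c2 c3 x u - f c1 u) < m.
Proof.
  intros Hm HM. pose proof (Kc_pos c1 c2 c3).
  set (K := Kc c1 c2 c3 + 2 * M).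
  exists (Rmin (1/2) (m / (K + 1))). split; [|split].
  - apply Rmin_pos; [lra| apply Rdiv_lt_0_compat; unfold K; lra].
  - apply Rmin_l.
  - intros x u [Hxa Hxb] Hu.
    assert (Hx1 : x + 1 < 1/2) by (pose proof (Rmin_l (1/2) (m / (K + 1))); lra).
    assert (Hx2 : x + 1 < m / (K + 1)) by (pose proof (Rmin_r (1/2) (m / (K + 1))); lra).
    rewrite Hf_decomp, Rabs_mult, (Rabs_right (x + 1)) by lra.
    assert (Rabs (c2 - c1 + c3 * (1 - x) - 2 * u) <= K).
    { replace (c2 - c1 + c3 * (1 - x) - 2 * u) with ((c2 - c1 + c3 * (1 - x)) + - (2 * u)) by ring.
      eapply Rle_trans; [apply Rabs_triang|].
      rewrite Rabs_Ropp, Rabs_mult, (Rabs_right 2) by lra.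
      pose proof (A_bound c1 c2 c3 x ltac:(lra)). unfold K. lra. }
    apply lt_div_mul in Hx2; [|unfold K; lra].
    pose proof (Rabs_pos (c2 - c1 + c3 * (1 - x) - 2 * u)). nra.
Qed.


Lemma dpos delta c1 c2 c3 U U' x m : Hyp delta c1 c2 c3 U U' ->
  -1 < x < -1 + delta -> x < 0 -> 0 < m -> m <= Hf c1 c2 c3 x (U x) ->
  (m / 2) / (x + 1) <= U' x.
Proof.
  intros [Hd [HD HO]] Hx Hx0 Hm HH. specialize (HO x Hx).
  apply div_le; [lra|].
  assert (0 < U' x).
  { destruct (Rlt_or_le 0 (U' x)); auto. assert (0 < 1 - x ^ 2) by nra. nra. }
  nra.
Qed.

Lemma dneg delta c1 c2 c3 U U' x m : Hyp delta c1 c2 c3 U U' ->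
  -1 < x < -1 + delta -> x < 0 -> 0 < m -> Hf c1 c2 c3 x (U x) <= - m ->
  U' x <= - ((m / 2) / (x + 1)).
Proof.
  intros [Hd [HD HO]] Hx Hx0 Hm HH. specialize (HO x Hx).
  assert (m / 2 / (x + 1) <= - U' x); [|lra].
  apply div_le; [lra|].
  assert (U' x < 0).
  { destruct (Rlt_or_le (U' x) 0); auto. assert (0 < 1 - x ^ 2) by nra. nra. }
  nra.
Qed.

Lemma abs_between a b y : a <= y <= b -> Rabs y <= Rabs a + Rabs b.
Proof. intros H. unfold Rabs; repeat destruct Rcase_abs; lra. Qed.

Lemma min3 e0 e1 d : 0 < e0 -> 0 < e1 -> 0 < d ->
  exists e, 0 < e /\ e <= e0 /\ e <= e1 /\ e <= d.
Proof.
  intros. exists (Rmin e0 (Rmin e1 d)). repeat split.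
  - repeat apply Rmin_pos; auto.
  - apply Rmin_l.
  - eapply Rle_trans; [apply Rmin_r| apply Rmin_l].
  - eapply Rle_trans; [apply Rmin_r| apply Rmin_r].
Qed.

Lemma Zpos delta c1 c2 c3 U U' a b m : Hyp delta c1 c2 c3 U U' -> 0 < m ->
  (forall u, a <= u <= b -> m <= f c1 u) -> ev (fun x => a <= U x <= b) -> False.
Proof.
  intros HH Hm Hfm [e0 [He0 Hev]].
  pose proof HH as [Hd [HD HO]].
  destruct (near c1 c2 c3 (Rabs a + Rabs b) (m / 2)) as [e1 [He1 [He1' Hn]]]; [lra| pose proof (Rabs_pos a); pose proof (Rabs_pos b); lra|].
  destruct (min3 e0 e1 delta He0 He1 Hd) as [e [He [Hee0 [Hee1 Hed]]]].
  destruct (log_unb U U' e (m / 2 / 2) He ltac:(lra)) with (B := a) as [x [Hx Hux]].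
  - intros x Hx. apply HD. lra.
  - intros x Hx. apply (dpos delta c1 c2 c3 U U' x (m / 2) HH); try lra.
    assert (Hb : a <= U x <= b) by (apply Hev; lra).
    specialize (Hn x (U x) ltac:(lra) (abs_between a b (U x) Hb)).
    apply Rabs_def2 in Hn. specialize (Hfm (U x) Hb). lra.
  - assert (a <= U x <= b) by (apply Hev; lra). lra.
Qed.

Lemma Zneg delta c1 c2 c3 U U' a b m : Hyp delta c1 c2 c3 U U' -> 0 < m ->
  (forall u, a <= u <= b -> f c1 u <= - m) -> ev (fun x => a <= U x <= b) -> False.
Proof.
  intros HH Hm Hfm [e0 [He0 Hev]].
  pose proof HH as [Hd [HD HO]].
  destruct (near c1 c2 c3 (Rabs a + Rabs b) (m / 2)) as [e1 [He1 [He1' Hn]]]; [lra| pose proof (Rabs_pos a); pose proof (Rabs_pos b); lra|].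
  destruct (min3 e0 e1 delta He0 He1 Hd) as [e [He [Hee0 [Hee1 Hed]]]].
  destruct (log_unb_above U U' e (m / 2 / 2) He ltac:(lra)) with (B := b) as [x [Hx Hux]].
  - intros x Hx. apply HD. lra.
  - intros x Hx. apply (dneg delta c1 c2 c3 U U' x (m / 2) HH); try lra.
    assert (Hb : a <= U x <= b) by (apply Hev; lra).
    specialize (Hn x (U x) ltac:(lra) (abs_between a b (U x) Hb)).
    apply Rabs_def2 in Hn. specialize (Hfm (U x) Hb). lra.
  - assert (a <= U x <= b) by (apply Hev; lra). lra.
Qed.

Lemma dich delta c1 c2 c3 U U' v : Hyp delta c1 c2 c3 U U' -> f c1 v <> 0 ->
  ev (fun x => U x < v) \/ ev (fun x => v < U x).
Proof.
  intros HH Hv. pose proof HH as [Hd [HD HO]].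
  assert (Hm : 0 < Rabs (f c1 v)) by (apply Rabs_pos_lt; auto).
  destruct (near c1 c2 c3 (Rabs v) (Rabs (f c1 v))) as [e1 [He1 [He1' Hn]]]; [lra| apply Rabs_pos|].
  destruct (min3 e1 e1 delta He1 He1 Hd) as [e [He [Hee0 [_ Hed]]]].
  assert (HHf : forall x, -1 < x < -1 + e -> Rabs (Hf c1 c2 c3 x v - f c1 v) < Rabs (f c1 v))
    by (intros x Hx; apply Hn; [lra| apply Rle_refl]).
  assert (HDx : forall x, -1 < x < -1 + e -> is_derive U x (U' x)) by (intros; apply HD; lra).
  assert (HDpos : forall x, -1 < x < -1 + e -> 0 < 1 - x ^ 2) by (intros; nra).
  destruct (Rlt_or_le (f c1 v) 0) as [Hneg|Hpos].
  -
    assert (Hc : forall x, -1 < x < -1 + e -> U x = v -> U' x < 0).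
    { intros x Hx Hux. specialize (HHf x Hx). rewrite (Rabs_left (f c1 v)) in HHf by lra.
      apply Rabs_def2 in HHf. specialize (HO x ltac:(lra)). rewrite Hux in HO.
      specialize (HDpos x Hx). destruct (Rlt_or_le (U' x) 0); auto. exfalso.
      assert (0 <= (1 - x ^ 2) * U' x) by (apply Rmult_le_pos; lra). lra. }
    destruct (classic (exists b, -1 < b < -1 + e /\ v <= U b)) as [[b [Hb Hub]]|Hn'].
    + right. exists (b + 1). split; [lra|]. intros a Ha.
      destruct (Rlt_or_le v (U a)) as [|Hua]; auto.
      pose proof (cross U U' (-1) (-1 + e) v HDx Hc a b ltac:(lra) ltac:(lra) ltac:(lra) Hua). lra.
    + left. exists e. split; auto. intros x Hx. destruct (Rlt_or_le (U x) v); auto.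
      exfalso; apply Hn'; eauto.
  - assert (Hpos' : 0 < f c1 v) by (destruct Hpos; auto; congruence).
    assert (Hc : forall x, -1 < x < -1 + e -> U x = v -> 0 < U' x).
    { intros x Hx Hux. specialize (HHf x Hx). rewrite (Rabs_right (f c1 v)) in HHf by lra.
      apply Rabs_def2 in HHf. specialize (HO x ltac:(lra)). rewrite Hux in HO.
      specialize (HDpos x Hx). destruct (Rlt_or_le 0 (U' x)); auto. exfalso.
      assert ((1 - x ^ 2) * U' x <= 0) by (apply Rmult_le_0_l; lra). lra. }
    destruct (classic (exists b, -1 < b < -1 + e /\ U b <= v)) as [[b [Hb Hub]]|Hn'].
    + left. exists (b + 1). split; [lra|]. intros a Ha.
      destruct (Rlt_or_le (U a) v) as [|Hua]; auto.
      pose proof (cross_up U U' (-1) (-1 + e) v HDx Hc a b ltac:(lra) ltac:(lra) ltac:(lra) Hua). lra.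
    + right. exists e. split; auto. intros x Hx. destruct (Rlt_or_le v (U x)); auto.
      exfalso; apply Hn'; eauto.
Qed.

Lemma A_bounds c1 c2 c3 x : -1 < x < 0 ->
  - Kc c1 c2 c3 <= c2 - c1 + c3 * (1 - x) <= Kc c1 c2 c3.
Proof.
  intros Hx. pose proof (A_bound c1 c2 c3 x Hx).
  pose proof (Rle_abs (c2 - c1 + c3 * (1 - x))).
  pose proof (Rle_abs (- (c2 - c1 + c3 * (1 - x)))). rewrite Rabs_Ropp in H1. lra.
Qed.

Lemma c1_le c1 c2 c3 : c1 <= Kc c1 c2 c3 /\ - Kc c1 c2 c3 <= c1.
Proof. unfold Kc. pose proof (Rle_abs c1). pose proof (Rle_abs (- c1)). rewrite Rabs_Ropp in H0.
  pose proof (Rabs_pos c2). pose proof (Rabs_pos c3). lra. Qed.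

Lemma upW delta c1 c2 c3 U U' : Hyp delta c1 c2 c3 U U' ->
  ev (fun x => U x < 3 * Kc c1 c2 c3 + 16).
Proof.
  intros HH. pose proof HH as [Hd [HD HO]].
  pose proof (Kc_pos c1 c2 c3). destruct (c1_le c1 c2 c3).
  set (K := Kc c1 c2 c3) in *.
  set (W := 3 * K + 16).
  destruct (dich delta c1 c2 c3 U U' W HH) as [Hl|[e0 [He0 Hev]]]; auto.
  { unfold f, W. nra. }
  exfalso.
  destruct (min3 e0 (1/2) delta He0 ltac:(lra) Hd) as [e [He [Hee0 [Hee1 Hed]]]].
  destruct (log_unb (fun x => / U x) (fun x => - U' x / U x ^ 2) e (1/16) He ltac:(lra)) with (B := 0)
    as [x [Hx Hgx]].
  - intros x Hx. apply (is_derive_inv U x (U' x)).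
    + apply HD; lra.
    + assert (W < U x) by (apply Hev; lra). unfold W in *. lra.
  - intros x Hx. assert (Hu : W < U x) by (apply Hev; lra).
    apply div_le; [lra|].
    destruct (A_bounds c1 c2 c3 x ltac:(lra)) as [HA1 HA2]. fold K in HA1, HA2.
    specialize (HO x ltac:(lra)).
    pose proof (Hf_decomp c1 c2 c3 x (U x)) as Hdec.
    set (u := U x) in *. set (A := c2 - c1 + c3 * (1 - x)) in *.
    assert (Hfu : Hf c1 c2 c3 x u <= - (u ^ 2 / 8)).
    { assert ((x + 1) * (A - 2 * u) <= K / 2).
      { assert ((x + 1) * A <= (x + 1) * K) by (apply Rmult_le_compat_l; lra).
        assert (0 <= (x + 1) * u) by (apply Rmult_le_pos; unfold W in *; lra). nra. }
      unfold f in Hdec. unfold W in Hu.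
      assert (16 <= u) by lra.
      assert (u * (3 * u / 8 - 2) >= 4 * u) by nra.
      assert (4 * u >= 3 * K) by lra. nra. }
    assert (0 < 1 - x ^ 2) by nra.
    assert (Hup : U' x < 0).
    { destruct (Rlt_or_le (U' x) 0); auto. assert (0 <= (1 - x ^ 2) * U' x) by (apply Rmult_le_pos; lra).
      assert (0 < u ^ 2) by (unfold W in *; nra). lra. }
    assert (HH1 : (1 - x ^ 2) <= 2 * (x + 1)) by nra.
    assert (HH2 : - U' x * (x + 1) >= u ^ 2 / 16).
    { assert (- U' x * (1 - x ^ 2) <= - U' x * (2 * (x + 1))) by (apply Rmult_le_compat_l; lra). nra. }
    assert (Hu0 : 0 < u) by (unfold W in *; lra).
    replace (- U' x / u ^ 2 * (x + 1)) with ((- U' x * (x + 1)) / u ^ 2) by (field; lra).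
    idtac.
    assert (0 < u ^ 2) by nra.
    replace (1 / 16) with ((u ^ 2 / 16) / u ^ 2) by (field; lra).
    unfold Rdiv at 1 2. apply Rmult_le_compat_r; [left; apply Rinv_0_lt_compat; lra| lra].
  - assert (W < U x) by (apply Hev; lra).
    assert (0 < / U x) by (apply Rinv_0_lt_compat; unfold W in *; lra). lra.
Qed.

Lemma lowV delta c1 c2 c3 U U' : Hyp delta c1 c2 c3 U U' ->
  ev (fun x => - (3 * Kc c1 c2 c3 + 4) < U x).
Proof.
  intros HH. pose proof HH as [Hd [HD HO]].
  pose proof (Kc_pos c1 c2 c3). destruct (c1_le c1 c2 c3).
  set (K := Kc c1 c2 c3) in *.
  set (V := - (3 * K + 4)).
  destruct (dich delta c1 c2 c3 U U' V HH) as [[e0 [He0 Hev]]|Hr]; auto.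
  { unfold f, V. nra. }
  exfalso.
  destruct (min3 e0 (1/2) delta He0 ltac:(lra) Hd) as [e [He [Hee0 [Hee1 Hed]]]].
  destruct (log_unb_above U U' e 2 He ltac:(lra)) with (B := V) as [x [Hx Hgx]].
  - intros x Hx. apply HD; lra.
  - intros x Hx. assert (Hu : U x < V) by (apply Hev; lra).
    replace 2 with (4 / 2) by field.
    apply (dneg delta c1 c2 c3 U U' x 4 HH); try lra.
    destruct (A_bounds c1 c2 c3 x ltac:(lra)) as [HA1 HA2]. fold K in HA1, HA2.
    pose proof (Hf_decomp c1 c2 c3 x (U x)) as Hdec.
    set (u := U x) in *. set (A := c2 - c1 + c3 * (1 - x)) in *.
    unfold V in Hu. unfold f in Hdec.
    assert ((x + 1) * A <= (x + 1) * K) by (apply Rmult_le_compat_l; lra).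
    assert ((x + 1) * (- u) <= 1/2 * (- u)) by (apply Rmult_le_compat_r; lra).
    assert (u ^ 2 >= (3 * K + 4) ^ 2) by nra.
    nra.
  - assert (U x < V) by (apply Hev; lra). lra.
Qed.

Lemma ev_and (P Q : R -> Prop) : ev P -> ev Q -> ev (fun x => P x /\ Q x).
Proof.
  intros [e1 [He1 H1]] [e2 [He2 H2]]. exists (Rmin e1 e2). split; [apply Rmin_pos; auto|].
  intros x Hx. pose proof (Rmin_l e1 e2). pose proof (Rmin_r e1 e2). split; [apply H1|apply H2]; lra.
Qed.

Lemma ev_mono (P Q : R -> Prop) : (forall x, P x -> Q x) -> ev P -> ev Q.
Proof. intros H [e [He H1]]. exists e. split; auto. Qed.

Lemma lim_of_ev (U : R -> R) L :
  (forall eps, 0 < eps -> ev (fun x => L - eps < U x < L + eps)) ->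
  filterlim U (at_right (-1)) (locally L).
Proof.
  intros H. apply filterlim_locally. intros eps.
  destruct (H eps (cond_pos eps)) as [e [He Hev]].
  unfold at_right, within, locally. exists (mkposreal e He). intros y Hy Hy1.
  unfold ball in *; simpl in *; unfold AbsRing_ball in *; simpl in *.
  unfold abs, minus, plus, opp in *; simpl in *.
  apply Rabs_def2 in Hy. destruct Hy.
  assert (L - eps < U y < L + eps) by (apply Hev; lra).
  apply Rabs_def1; lra.
Qed.

Theorem lemma2p1 (delta c1 c2 c3 : R) (U U' : R -> R) :
  0 < delta ->
  (forall x, -1 < x < -1 + delta -> is_derive U x (U' x)) ->
  (forall x, -1 < x < -1 + delta -> continuous U' x) ->
  (forall x, -1 < x < -1 + delta ->
     (1 - x ^ 2) * U' x + 2 * x * U x + / 2 * (U x) ^ 2 = Pc c1 c2 c3 x) ->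
  -1 <= c1 /\
  exists L : R,
    filterlim U (at_right (-1)) (locally L) /\
    (L = tau1 c1 \/ L = tau2 c1).
Proof.
  intros Hd HD _ HODE.
  assert (HH : Hyp delta c1 c2 c3 U U').
  { split; [auto| split; [auto|]]. intros x Hx. specialize (HODE x Hx). unfold Hf. lra. }
  pose proof (upW _ _ _ _ _ _ HH) as HW. pose proof (lowV _ _ _ _ _ _ HH) as HV.
  set (W := 3 * Kc c1 c2 c3 + 16) in *. set (V := - (3 * Kc c1 c2 c3 + 4)) in *.
  assert (Hc1 : -1 <= c1).
  { destruct (Rle_or_lt (-1) c1) as [|Hlt]; auto. exfalso.
    apply (Zneg delta c1 c2 c3 U U' V W (- (2 + 2 * c1)) HH); [lra| |].
    - intros u _. unfold f.
      assert (E : 2 * c1 + 2 * u - / 2 * u ^ 2 = 2 + 2 * c1 - / 2 * ((u - 2) * (u - 2))) by field.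
      rewrite E. pose proof (Rle_0_sqr (u - 2)). unfold Rsqr in *. lra.
    - apply (ev_mono (fun x => U x < W /\ V < U x)); [intros x Hx; lra| apply ev_and; auto]. }
  split; auto.
  set (s := sqrt (1 + c1)).
  assert (Hs0 : 0 <= s) by apply sqrt_pos.
  assert (Hss : s * s = 1 + c1) by (apply sqrt_sqrt; lra).
  assert (Hfac : forall u, f c1 u = - / 2 * (u - (2 - 2 * s)) * (u - (2 + 2 * s))).
  { intros u. unfold f. replace c1 with (s * s - 1) by lra. field. }
  assert (Hup : forall w, 2 + 2 * s < w -> ev (fun x => U x < w)).
  { intros w Hw. destruct (Rle_or_lt W w) as [HWw|HWw].
    - apply (ev_mono (fun x => U x < W)); auto. intros x Hx; lra.
    - assert (Hfw : f c1 w < 0) by (rewrite Hfac; nra).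
      destruct (dich delta c1 c2 c3 U U' w HH) as [|Hr]; [lra|auto|].
      exfalso. apply (Zneg delta c1 c2 c3 U U' w W (- f c1 w) HH); [lra| |].
      + intros u Hu. assert (f c1 u - f c1 w = - / 2 * (u - w) * (u + w - 4)) by (unfold f; field).
        nra.
      + apply (ev_mono (fun x => U x < W /\ w < U x)); [intros x Hx; lra| apply ev_and; auto]. }
  assert (Hlow : forall v, v < 2 - 2 * s -> ev (fun x => v < U x)).
  { intros v Hv. destruct (Rle_or_lt v V) as [HVv|HVv].
    - apply (ev_mono (fun x => V < U x)); auto. intros x Hx; lra.
    - assert (Hfv : f c1 v < 0) by (rewrite Hfac; nra).
      destruct (dich delta c1 c2 c3 U U' v HH) as [Hl|]; [lra| |auto].
      exfalso. apply (Zneg delta c1 c2 c3 U U' V v (- f c1 v) HH); [lra| |].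
      + intros u Hu. assert (f c1 u - f c1 v = - / 2 * (u - v) * (u + v - 4)) by (unfold f; field).
        nra.
      + apply (ev_mono (fun x => U x < v /\ V < U x)); [intros x Hx; lra| apply ev_and; auto]. }
  assert (Ht1 : tau1 c1 = 2 - 2 * s) by reflexivity.
  assert (Ht2 : tau2 c1 = 2 + 2 * s) by reflexivity.
  destruct (Req_dec s 0) as [Hs|Hs].
  - exists (tau1 c1). split; [|left; auto]. rewrite Ht1. apply lim_of_ev. intros eps Heps.
    apply (ev_mono (fun x => U x < 2 + 2 * s + eps /\ 2 - 2 * s - eps < U x)).
    + intros x Hx. rewrite Hs in Hx. lra.
    + apply ev_and; [apply Hup| apply Hlow]; lra.
  - assert (Hsp : 0 < s) by lra.
    destruct (classic (exists v, 2 - 2 * s < v < 2 + 2 * s /\ ev (fun x => v < U x)))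
      as [[v [Hv Hev]]|Hn].
    + exists (tau2 c1). split; [|right; auto]. rewrite Ht2. apply lim_of_ev. intros eps Heps.
      set (v' := Rmax v (2 + 2 * s - eps / 2)).
      assert (Hv1 : v <= v') by apply Rmax_l.
      assert (Hv2 : 2 + 2 * s - eps / 2 <= v') by apply Rmax_r.
      assert (Hv3 : v' < 2 + 2 * s) by (apply Rmax_lub_lt; lra).
      assert (Hfv : 0 < f c1 v') by (rewrite Hfac; nra).
      destruct (dich delta c1 c2 c3 U U' v' HH) as [Hl|Hr]; [lra| |].
      * exfalso. apply (Zpos delta c1 c2 c3 U U' v v' (/ 2 * (v - (2 - 2 * s)) * (2 + 2 * s - v')) HH).
        -- assert (0 < (v - (2 - 2 * s)) * (2 + 2 * s - v')) by nra. lra.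
        -- intros u Hu. rewrite Hfac.
           assert ((v - (2 - 2 * s)) * (2 + 2 * s - v') <= (u - (2 - 2 * s)) * (2 + 2 * s - u)).
           { apply Rmult_le_compat; lra. }
           lra.
        -- apply (ev_mono (fun x => U x < v' /\ v < U x)); [intros x Hx; lra| apply ev_and; auto].
      * apply (ev_mono (fun x => U x < 2 + 2 * s + eps /\ v' < U x)).
        -- intros x Hx. lra.
        -- apply ev_and; auto. apply Hup; lra.
    + exists (tau1 c1). split; [|left; auto]. rewrite Ht1. apply lim_of_ev. intros eps Heps.
      set (w' := Rmin (2 - 2 * s + eps / 2) (2 - s)).
      assert (Hw1 : w' <= 2 - 2 * s + eps / 2) by apply Rmin_l.
      assert (Hw2 : w' <= 2 - s) by apply Rmin_r.
      assert (Hw3 : 2 - 2 * s < w') by (apply Rmin_glb_lt; lra).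
      assert (Hfw : 0 < f c1 w') by (rewrite Hfac; nra).
      destruct (dich delta c1 c2 c3 U U' w' HH) as [Hl|Hr]; [lra| |].
      * apply (ev_mono (fun x => U x < w' /\ 2 - 2 * s - eps < U x)).
        -- intros x Hx. lra.
        -- apply ev_and; auto. apply Hlow; lra.
      * exfalso. apply Hn. exists w'. split; [lra|auto].
Qed.
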